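(* Let $e\geq 1$, $n\geq 2$, and let $s\in G(e,e,n)$ be the reflection with reflecting hyperplane $z_i=\zeta z_j$ ($i\neq j$, $\zeta\in\mu_e$). The sign of the permutation induced by $s$ on the set of reflecting hyperplanes of $G(e,e,n)$ is $(-1)^{(n-2)e+(e-2)/2}=(-1)^{(e-2)/2}$ if $e$ is even, and $(-1)^{(n-2)e+(e-1)/2}=(-1)^{n+(e-1)/2}$ if $e$ is odd.
   Context: $\mu_e$ is the group of $e$-th roots of unity. $G(e,e,n)$ is the group of $n\times n$ monomial matrices with nonzero entries in $\mu_e$ whose product is $1$, acting on $\mathbb{C}^n$; its reflecting hyperplanes are $z_a=\xi z_b$ for $a<b$, $\xi\in\mu_e$. *)

(* Defs.v *)
From mathcomp Require Import all_boot all_order all_algebra all_fingroup all_field.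
Set Implicit Arguments. Unset Strict Implicit. Unset Printing Implicit Defensive.
Import GRing.Theory Num.Theory.
Local Open Scope ring_scope.

Definition in_Geen (e n : nat) (M : 'M[algC]_n) : Prop :=
  exists (p : 'S_n) (d : 'I_n -> algC),
    [/\ forall k, d k ^+ e = 1,
        \prod_k d k = 1 &
        M = \matrix_(r, c) (if r == p c then d c else 0)].

Definition reflection_with_hyp (n : nat) (s : 'M[algC]_n) (i j : 'I_n) (zeta : algC) : Prop :=
  s != 1%:M /\ forall z : 'cV[algC]_n, z i 0 = zeta * z j 0 -> s *m z = z.

(* Index set of the reflecting hyperplanes of G(e,e,n): triples (a,b,k) with
   a < b, k : 'I_e, standing for the hyperplane z_a = w^k z_b where w is a
   primitive e-th root of unity (so w^k runs over mu_e). *)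
Definition hypidx (n e : nat) := {t : 'I_n * 'I_n * 'I_e | (t.1.1 < t.1.2)%N}.

Definition hyp (n e : nat) (w : algC) (t : hypidx n e) (z : 'cV[algC]_n) : Prop :=
  z (sval t).1.1 0 = w ^+ (sval t).2 * z (sval t).1.2 0.

Definition induces_perm (n e : nat) (w : algC) (s : 'M[algC]_n) (p : {perm hypidx n e}) : Prop :=
  forall t (y : 'cV[algC]_n), hyp w (p t) y <-> exists2 z, hyp w t z & y = s *m z.

(* Main.v *)
Require Import Defs.
From mathcomp Require Import all_boot all_order all_algebra all_fingroup all_field.
From mathcomp Require Import zify.
From mathcomp.algebra_tactics Require Import ring.
Set Implicit Arguments. Unset Strict Implicit. Unset Printing Implicit Defensive.
Import GRing.Theory Num.Theory.

Lemma perm_nofix (T : finType) (p : {perm T}) :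
  [set x | p x != x] = set0 -> p = 1%g.
Proof.
move=> H; apply/permP => z; rewrite perm1; apply/eqP; apply: contraT => Hz.
have : z \in [set x | p x != x] by rewrite inE.
by rewrite H inE.
Qed.

Lemma invol_odd (T : finType) (p : {perm T}) :
  (forall x, p (p x) = x) -> odd_perm p = odd (#|[set x | p x != x]| ./2).
Proof.
move: {2}#|_| (leqnn #|[set x | p x != x]|) => m.
elim: m p => [|m IH] p Hm pp;
 (case: (set_0Vmem [set x | p x != x]) => [H|[x]];
  [ by rewrite H cards0 (perm_nofix H) odd_perm1 | ]).
  by move=> Hx; move: Hm; rewrite leqn0 cards_eq0 => /eqP H; move: Hx; rewrite H inE.
rewrite inE => Hx.
set y := p x.
set q := (tperm x y * p)%g.
have Hp : p = (tperm x y * q)%g by rewrite /q tpermKg.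
have qx : q x = x by rewrite permM tpermL pp.
have qy : q y = y by rewrite permM tpermR.
have qz : forall z, z != x -> z != y -> q z = p z.
  by move=> z zx zy; rewrite permM tpermD // eq_sym.
have pz : forall z, z != x -> z != y -> p z != x /\ p z != y.
  move=> z zx zy; split; [apply: contra zy | apply: contra zx].
    by move/eqP=> H; rewrite /y -H pp.
  by move/eqP=> H; rewrite -(pp z) H /y pp.
have qq : forall z, q (q z) = z.
  move=> z; case: (eqVneq z x) => [->|zx]; first by rewrite !qx.
  case: (eqVneq z y) => [->|zy]; first by rewrite !qy.
  have [h1 h2] := pz z zx zy.
  by rewrite (qz z zx zy) (qz _ h1 h2) pp.
have xy : x != y by rewrite eq_sym.
have HS : [set z | p z != z] = x |: (y |: [set z | q z != z]).
  apply/setP => z; rewrite !inE.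
  case: (eqVneq z x) => [->|zx] /=; first by rewrite eq_sym.
  case: (eqVneq z y) => [->|zy] /=; first by rewrite /y pp.
  by rewrite qz.
have Hy : y \notin [set z | q z != z] by rewrite inE qy eqxx.
have Hx' : x \notin y |: [set z | q z != z] by rewrite !inE qx eqxx orbF.
have Hc : #|[set z | p z != z]| = (#|[set z | q z != z]|).+2.
  by rewrite HS cardsU1 Hx' cardsU1 Hy.
rewrite Hc {1}Hp odd_mul_tperm xy IH //.
  idtac.
by move: Hm; rewrite Hc ltnS => /ltnW.
Qed.

Lemma sum_ind (T : finType) (P : pred T) : \sum_(x : T) (P x : nat) = #|[set x | P x]|.
Proof. by rewrite -sum1dep_card [RHS]big_mkcond; apply: eq_bigr => x _; case: (P x). Qed.

Lemma sum_prod (T : finType) (P Q : pred T) c :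
  \sum_(a : T) \sum_(b : T) ((P a : nat) * (Q b : nat) * c) = #|[set a | P a]| * #|[set b | Q b]| * c.
Proof.
rewrite -!sum_ind !big_distrl /=; apply: eq_bigr => a _.
rewrite big_distrr big_distrl /=; apply: eq_bigr => b _; lia.
Qed.

Lemma count_main n e f (i j : 'I_n) (hij : i != j) (g : 'I_n -> 'I_n -> nat)
  (hg : forall a b, a != b -> g a b = if a \in [set i; j] then (if b \in [set i; j] then e - f else e)
                                 else (if b \in [set i; j] then e else 0)) :
  \sum_(a : 'I_n) \sum_(b : 'I_n) ((a < b) * g a b) = 2 * (n - 2) * e + (e - f).
Proof.
set A := [set i; j].
rewrite -/A in hg.
have E : forall a b : 'I_n, (a < b) * g a b =
   (a < b) * (a \in A) * (b \notin A) * e + (a < b) * (a \notin A) * (b \in A) * e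
   + ((a < b) * (a \in A) * (b \in A)) * (e - f).
  move=> a b; case: (ltngtP a b) => hab /=.
  - rewrite hg; last by rewrite neq_ltn hab.
    by case: (a \in A); case: (b \in A) => /=; lia.
  - by lia.
  - by lia.
under eq_bigr do under eq_bigr do rewrite E.
under eq_bigr do rewrite big_split /=.
rewrite big_split /=.
under eq_bigr do rewrite big_split /=.
rewrite big_split /=.
rewrite [X in _ + X + _](exchange_big) /=.
rewrite -big_split /=.
have E2 : forall a b : 'I_n, (a < b) * (a \in A) * (b \notin A) * e + (b < a) * (b \notin A) * (a \in A) * e
            = (a \in A) * (b \notin A) * e.
  move=> a b; case: (ltngtP a b) => hab /=.
  - by case: (a \in A); case: (b \in A) => /=; lia.
  - by case: (a \in A); case: (b \in A) => /=; lia.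
  - have hab' : a = b by apply: val_inj.
    by subst b; case: (a \in A) => /=; lia.
under eq_bigr do rewrite -big_split /=.
under eq_bigr do under eq_bigr do rewrite E2.
rewrite (sum_prod (fun a => a \in A) (fun b => b \notin A)).
have eA : [set a | a \in A] = A by apply/setP => x; rewrite inE.
have cA : #|[set a | a \in A]| = 2 by rewrite eA cards2 hij.
have cC : #|[set b | b \notin A]| = n - 2.
  have -> : [set b | b \notin A] = ~: A by apply/setP => x; rewrite !inE.
  have := cardsC A; rewrite card_ord; rewrite eA in cA; rewrite cA; lia.
have X : \sum_(a < n) \sum_(b < n) (a < b) * (a \in A) * (b \in A) * (e - f)
          = (\sum_(a in A) \sum_(b in A) (a < b)) * (e - f).
  rewrite big_distrl [in RHS]big_mkcond /=; apply: eq_bigr => a _.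
  rewrite big_distrl [in RHS]big_mkcond /=. case: (a \in A) => /=.
    apply: eq_bigr => b _; case: (b \in A) => /=; lia.
  rewrite big1 // => b _; lia.
rewrite X cA cC.
have -> : \sum_(a in A) \sum_(b in A) (a < b) = 1.
  rewrite /A big_setU1 ?inE //= big_set1 big_setU1 ?inE //= big_set1 big_setU1 ?inE //= big_set1.
  move: hij; rewrite -val_eqE /=; lia.
lia.
Qed.

Lemma half_split x m : ~~ odd m -> (2 * x + m)./2 = x + m./2.
Proof.
move=> hm; have E := odd_double_half m; rewrite (negbTE hm) add0n in E.
by rewrite -{1}E mul2n -doubleD doubleK.
Qed.


Lemma card_neg (T : finType) (P : pred T) :
  #|[set x | ~~ P x]| = #|T| - #|[set x | P x]|.
Proof.
rewrite -(cardsC [set x | P x]).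
have -> : ~: [set x | P x] = [set x | ~~ P x] by apply/setP => x; rewrite !inE.
by rewrite addKn.
Qed.

Local Open Scope ring_scope.

Lemma count_one e (w : algC) (he : (0 < e)%N) (hw : e.-primitive_root w) x :
  x ^+ e = 1 -> #|[set k : 'I_e | w ^+ k == x]| = 1%N.
Proof.
move=> hx; have [k0 ->] := prim_rootP hw hx.
have -> : [set k : 'I_e | w ^+ k == w ^+ k0] = [set k0].
  apply/setP => k; rewrite !inE (eq_prim_root_expr hw) !modn_small //.
by rewrite cards1.
Qed.

Lemma count_zero e (w : algC) (hw : e.-primitive_root w) x :
  x ^+ e != 1 -> #|[set k : 'I_e | w ^+ k == x]| = 0%N.
Proof.
move=> hx; apply/eqP; rewrite cards_eq0; apply/eqP/setP => k; rewrite !inE.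
apply/negP => /eqP E; move: hx; by rewrite -E exprAC (prim_expr_order hw) expr1n eqxx.
Qed.

Lemma count_sq e (w : algC) (he : (0 < e)%N) (hw : e.-primitive_root w) nu :
  nu ^+ e = 1 -> #|[set k : 'I_e | (w ^+ k) ^+ 2 == nu ^+ 2]| = if odd e then 1%N else 2%N.
Proof.
move=> hnu.
have nunz : nu != 0.
  apply/eqP => E; move: hnu; rewrite E expr0n; case: e he {hw} => // ? _ /eqP.
  by rewrite eq_sym oner_eq0.
have -> : [set k : 'I_e | (w ^+ k) ^+ 2 == nu ^+ 2] =
          [set k : 'I_e | w ^+ k == nu] :|: [set k : 'I_e | w ^+ k == - nu].
  by apply/setP => k; rewrite !inE eqf_sqr.
rewrite cardsU.
have -> : [set k : 'I_e | w ^+ k == nu] :&: [set k : 'I_e | w ^+ k == - nu] = set0.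
  apply/setP => k; rewrite !inE; apply/negP => /andP [/eqP -> /eqP E].
  move/eqP: E; rewrite -addr_eq0 -mulr2n mulrn_eq0 /= => E.
  by rewrite E in nunz.
rewrite cards0 subn0 count_one //.
have hm : (- nu) ^+ e = (-1) ^+ e.
  by rewrite [LHS]exprNn hnu mulr1.
case: ifP => ho.
  rewrite count_zero // hm -signr_odd ho expr1.
  apply/negP => /eqP E; have : (0:algC) < 1 := ltr01.
  by rewrite -E oppr_gt0 ltr10.
by rewrite count_one // hm -signr_odd ho expr0.
Qed.

Definition cf n (i j : 'I_n) (zeta : algC) (r : 'I_n) :=
  if r == i then zeta else if r == j then zeta^-1 else 1.

Definition fixr n (i j : 'I_n) (zeta w : algC) (a b : 'I_n) (k : nat) : bool :=
  if (a \notin [set i; j]) && (b \notin [set i; j]) then true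
  else if (a \in [set i; j]) && (b \in [set i; j]) then cf i j zeta a == (w ^+ k) ^+ 2 * cf i j zeta b
  else false.

Definition vec2 n (a b : 'I_n) (u v : algC) : 'cV[algC]_n :=
  \col_r (if r == a then u else if r == b then v else 0).

Lemma vec2a n (a b : 'I_n) u v : vec2 a b u v a 0 = u.
Proof. by rewrite mxE eqxx. Qed.
Lemma vec2b n (a b : 'I_n) u v : a != b -> vec2 a b u v b 0 = v.
Proof. by move=> ab; rewrite mxE eq_sym (negbTE ab) eqxx. Qed.
Lemma vec2o n (a b r : 'I_n) u v : r != a -> r != b -> vec2 a b u v r 0 = 0.
Proof. by move=> ra rb; rewrite mxE (negbTE ra) (negbTE rb). Qed.

Lemma sig_out n (i j r : 'I_n) zeta : r \notin [set i; j] -> tperm i j r = r /\ cf i j zeta r = 1.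
Proof.
rewrite !inE negb_or => /andP [ri rj]; split; first by rewrite tpermD // eq_sym.
by rewrite /cf (negbTE ri) (negbTE rj).
Qed.

Lemma sig_in n (i j r : 'I_n) zeta : i != j -> zeta != 0 -> r \in [set i; j] ->
  [/\ tperm i j r \in [set i; j], tperm i j r != r & cf i j zeta r != 0].
Proof.
move=> hij znz; rewrite !inE => /orP [] /eqP ->.
  rewrite tpermL /cf eqxx; split => //; rewrite ?eqxx ?orbT //; by rewrite eq_sym.
rewrite tpermR /cf (eq_sym j i) (negbTE hij) eqxx; split => //; rewrite ?eqxx //.
by rewrite invr_eq0.
Qed.

Lemma sig_pair n (i j a b : 'I_n) : a \in [set i; j] -> b \in [set i; j] -> a != b ->
  tperm i j a = b /\ tperm i j b = a.
Proof.
rewrite !inE => /orP [] /eqP -> /orP [] /eqP ->; rewrite ?eqxx // => _;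
 by rewrite ?tpermL ?tpermR.
Qed.

Lemma fix_iff n (w : algC) (wnz : forall k, w ^+ k != 0) (i j : 'I_n) (hij : i != j)
  (zeta : algC) (znz : zeta != 0) (s : 'M[algC]_n)
  (S : forall (y : 'cV[algC]_n) r, (s *m y) r 0 = cf i j zeta r * y (tperm i j r) 0)
  (a b : 'I_n) (k : nat) (ab : a != b) :
  (forall y : 'cV[algC]_n, y a 0 = w ^+ k * y b 0 <-> (s *m y) a 0 = w ^+ k * (s *m y) b 0)
  <-> fixr i j zeta w a b k.
Proof.
set x := w ^+ k.
have xnz : x != 0 by apply: wnz.
rewrite /fixr; case Ha: (a \in [set i; j]); case Hb: (b \in [set i; j]) => /=.
- have [sa sb] := sig_pair Ha Hb ab.
  have [_ _ ca] := sig_in hij znz Ha.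
  have [_ _ cb] := sig_in hij znz Hb.
  split.
    move=> H; have := H (vec2 a b x 1); rewrite !S sa sb vec2a vec2b // => -[/(_ (esym (mulr1 _)))].
    move=> E _; rewrite mulr1 in E; apply/eqP.
    by rewrite E [cf _ _ _ b * _]mulrC mulrA expr2.
  move/eqP => E y; rewrite !S sa sb E; split.
    by move=> ->; rewrite expr2 -!mulrA; congr (_ * _); rewrite mulrCA mulrA.
  rewrite expr2 -!mulrA => /(mulfI xnz) H.
  apply: (mulfI cb); by rewrite -H mulrCA.
- split => // H; have := H (vec2 a b x 1); rewrite !S.
  have [sa na _] := sig_in hij znz Ha.
  have [sb cb] := sig_out zeta (negbT Hb).
  have nb : tperm i j a != b by apply: contraTneq sa => ->; rewrite Hb.
  rewrite sb cb vec2a vec2b // (vec2o _ _ na nb).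
  by rewrite !mulr0 !mulr1 => -[/(_ erefl) /esym /eqP]; rewrite (negbTE xnz).
- split => // H; have := H (vec2 a b x 1); rewrite !S.
  have [sb nb _] := sig_in hij znz Hb.
  have [sa ca] := sig_out zeta (negbT Ha).
  have na : tperm i j b != a by apply: contraTneq sb => ->; rewrite Ha.
  rewrite sa ca vec2a vec2b // (vec2o _ _ na nb).
  rewrite !mulr0 !mulr1 mul1r => -[/(_ erefl) /eqP]; by rewrite (negbTE xnz).
- split => // _ y.
  have [sa ca] := sig_out zeta (negbT Ha).
  have [sb cb] := sig_out zeta (negbT Hb).
  by rewrite !S sa sb ca cb !mul1r.
Qed.

Lemma mono_mul n (p : 'S_n) (d : 'I_n -> algC) (y : 'cV[algC]_n) r :
  ((\matrix_(r, c) (if r == p c then d c else 0)) *m y) r 0 = d ((p^-1)%g r) * y ((p^-1)%g r) 0.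
Proof.
rewrite mxE (bigD1 ((p^-1)%g r)) //= mxE permKV eqxx big1 ?addr0 // => c Hc.
rewrite mxE; case: eqP => [E|]; last by rewrite mul0r.
by move: Hc; rewrite E permK eqxx.
Qed.

Lemma refl_form e n (he : (1 <= e)%N) (i j : 'I_n) (hij : i != j) (zeta : algC)
  (hzeta : zeta ^+ e = 1) (s : 'M[algC]_n)
  (p : 'S_n) (d : 'I_n -> algC) (hd : forall k, d k ^+ e = 1)
  (hs : s = \matrix_(r, c) (if r == p c then d c else 0))
  (hne : s != 1%:M) (hfix : forall z : 'cV[algC]_n, z i 0 = zeta * z j 0 -> s *m z = z) :
  forall (y : 'cV[algC]_n) r, (s *m y) r 0 = cf i j zeta r * y (tperm i j r) 0.
Proof.
have e0 : (e == 0)%N = false by case: e he {hzeta hd}.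
have dnz : forall k, d k != 0.
  move=> k; apply/eqP => E; move: (hd k); rewrite E expr0n e0 => /eqP.
  by rewrite eq_sym oner_eq0.
have znz : zeta != 0.
  apply/eqP => E; move: hzeta; rewrite E expr0n e0 => /eqP.
  by rewrite eq_sym oner_eq0.
set q := (p^-1)%g.
have key : forall f : 'I_n -> algC, f i = zeta * f j ->
    forall r, d (q r) * f (q r) = f r.
  move=> f hf r; have H := hfix (\col_m f m).
  rewrite !mxE in H; have {}H := H hf.
  by have := congr1 (fun M : 'cV[algC]_n => M r 0) H; rewrite hs mono_mul !mxE.
have qk : forall k, k != i -> k != j -> q k = k /\ d k = 1.
  move=> k ki kj.
  have := key (fun m => if m == k then 1 else 0).
  have ik : (i == k) = false by rewrite eq_sym (negbTE ki).
  have jk : (j == k) = false by rewrite eq_sym (negbTE kj).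
  rewrite ik jk mulr0 => /(_ erefl k); rewrite eqxx.
  case: eqP => [->|_]; last by rewrite mulr0 => /esym/eqP; rewrite oner_eq0.
  by rewrite mulr1.
have qij : forall r, r != i -> r != j -> q r != i /\ q r != j.
  move=> r ri rj; have [h1 _] := qk r ri rj; by rewrite h1.
have qin : forall r, q r = i \/ q r = j -> r = i \/ r = j.
  move=> r H; case: (eqVneq r i) => [|ri]; first by left.
  case: (eqVneq r j) => [|rj]; first by right.
  have [h1 h2] := qij r ri rj; case: H => /eqP; by rewrite ?(negbTE h1) ?(negbTE h2).
have qi : q i = i \/ q i = j.
  case: (eqVneq (q i) i) => [|h1]; first by left.
  case: (eqVneq (q i) j) => [|h2]; first by right.
  have [h3 _] := qk _ h1 h2; move: h3 => /(congr1 p); rewrite /q !permKV => E.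
  by move: h1; rewrite E eqxx.
have qj : q j = i \/ q j = j.
  case: (eqVneq (q j) i) => [|h1]; first by left.
  case: (eqVneq (q j) j) => [|h2]; first by right.
  have [h3 _] := qk _ h1 h2; move: h3 => /(congr1 p); rewrite /q !permKV => E.
  by move: h2; rewrite E eqxx.
have qinj : injective q by apply: perm_inj.
pose f0 := fun m : 'I_n => if m == i then zeta else if m == j then 1 else 0.
have hf0 : f0 i = zeta * f0 j by rewrite /f0 eqxx eq_sym (negbTE hij) eqxx mulr1.
have K := key f0 hf0.
have f0i : f0 i = zeta by rewrite /f0 eqxx.
have f0j : f0 j = 1 by rewrite /f0 eq_sym (negbTE hij) eqxx.
case: qi => Hqi.
  have Hqj : q j = j.
    case: qj => // E; move: hij; by rewrite -(qinj i j) ?Hqi ?E ?eqxx.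
  have di : d i = 1.
    have := K i; rewrite Hqi f0i => H; apply: (mulIf znz); by rewrite H mul1r.
  have dj : d j = 1.
    by have := K j; rewrite Hqj f0j !mulr1.
  have all1 : forall c, q c = c /\ d c = 1.
    move=> c; case: (eqVneq c i) => [->|ci]; first by [].
    case: (eqVneq c j) => [->|cj]; first by [].
    exact: qk.
  move: hne; rewrite hs => /eqP; case; apply/matrixP => r c; rewrite !mxE.
  have [qc dc] := all1 c.
  have pc : p c = c by rewrite -{1}qc /q permKV.
  by rewrite pc dc; case: eqP.
have Hqj : q j = i.
  case: qj => // E; move: hij; by rewrite -(qinj i j) ?Hqi ?E ?eqxx.
have dj : d j = zeta by have := K i; rewrite Hqi f0j f0i mulr1.
have di : d i = zeta^-1.
  have := K j; rewrite Hqj f0i f0j => /(congr1 (fun x => x / zeta)).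
  by rewrite mulfK // div1r.
move=> y r; rewrite hs mono_mul /cf.
case: (eqVneq r i) => [->|ri]; first by rewrite Hqi dj tpermL.
case: (eqVneq r j) => [->|rj]; first by rewrite Hqj di tpermR.
have [h1 h2] := qk r ri rj.
by rewrite h1 h2 tpermD // eq_sym.
Qed.

Lemma prim_nz e (w : algC) : (0 < e)%N -> e.-primitive_root w -> forall k, w ^+ k != 0.
Proof.
move=> he hw k; rewrite expf_eq0 negb_and; apply/orP; right.
apply/eqP => E; move: (prim_expr_order hw); rewrite E expr0n.
by case: e he {hw} => // ? _ /eqP; rewrite eq_sym oner_eq0.
Qed.

Lemma unit_hyp n (w : algC) (wnz : forall k, w ^+ k != 0) (a b m : 'I_n) k : a != b ->
  ((\col_r (if r == m then 1 else 0) : 'cV[algC]_n) a 0 = w ^+ k * (\col_r (if r == m then 1 else 0) : 'cV[algC]_n) b 0)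
  <-> (m != a) && (m != b).
Proof.
move=> ab; rewrite !mxE; case: (eqVneq a m) => [E|am].
  subst m; rewrite eq_sym (negbTE ab) mulr0 /=; split => // /eqP; by rewrite oner_eq0.
case: (eqVneq b m) => [E|bm] /=.
  rewrite mulr1; split => // /esym/eqP; by rewrite (negbTE (wnz k)).
by rewrite mulr0.
Qed.

Lemma hyp_inj e n (w : algC) (he : (0 < e)%N) (hw : e.-primitive_root w) (t t' : hypidx n e) :
  (forall y, hyp w t y <-> hyp w t' y) -> t = t'.
Proof.
move: t t' => [[[a b] k] /= hab] [[[a' b'] k'] /= hab'] H.
rewrite /hyp /= in H.
have wnz := prim_nz he hw.
have ab : a != b by rewrite neq_ltn hab.
have ab' : a' != b' by rewrite neq_ltn hab'.
have E : forall m : 'I_n, ((m != a) && (m != b)) = ((m != a') && (m != b')).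
  move=> m; apply/idP/idP.
    by move/(@unit_hyp _ _ wnz a b m k ab)/H/(@unit_hyp _ _ wnz a' b' m k' ab').
  by move/(@unit_hyp _ _ wnz a' b' m k' ab')/H/(@unit_hyp _ _ wnz a b m k ab).
have h1 : (a == a') || (a == b').
  by move: (E a); rewrite eqxx /= => /esym/negbT; rewrite negb_and !negbK.
have h2 : (b == a') || (b == b').
  by move: (E b); rewrite eqxx andbF /= => /esym/negbT; rewrite negb_and !negbK.
have h3 : (a' == a) || (a' == b).
  by move: (E a'); rewrite eqxx /= => /negbT; rewrite negb_and !negbK.
have h4 : (b' == a) || (b' == b).
  by move: (E b'); rewrite eqxx andbF /= => /negbT; rewrite negb_and !negbK.
rewrite -!val_eqE /= in h1 h2 h3 h4.
have ea : a = a' by apply: val_inj => /=; lia.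
have eb : b = b' by apply: val_inj => /=; lia.
subst a' b'.
pose v : 'cV[algC]_n := \col_r (if r == a then w ^+ k else if r == b then 1 else 0).
have := H v; rewrite !mxE eqxx eq_sym (negbTE ab) eqxx mulr1 => [[/(_ erefl) /esym /eqP]].
rewrite mulr1 (eq_prim_root_expr hw) !modn_small // => /eqP ekk.
have -> : k' = k by apply: val_inj.
by rewrite (bool_irrelevance hab' hab).
Qed.

Lemma alg1 (ca cb x u v : algC) : ca != 0 ->
  (u = x * cb / ca * v <-> ca * u = x * (cb * v)).
Proof.
move=> ca0; split => [->|H]; first by field; rewrite ca0.
apply: (mulfI ca0); rewrite H; field; by rewrite ca0.
Qed.

Lemma alg2 (ca cb x u v : algC) : ca != 0 -> cb != 0 -> x != 0 ->
  (v = (x * cb / ca)^-1 * u <-> ca * u = x * (cb * v)).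
Proof.
move=> ca0 cb0 x0; split => [->|H]; first by field; rewrite ca0 cb0 x0.
have -> : u = x * (cb * v) / ca by rewrite -H mulrC mulKf.
by field; rewrite ca0 cb0 x0.
Qed.

Definition fixt n e (i j : 'I_n) (zeta w : algC) (t : hypidx n e) : bool :=
  fixr i j zeta w (sval t).1.1 (sval t).1.2 (sval t).2.

Lemma fixt_iff e n (w : algC) (he : (0 < e)%N) (hw : e.-primitive_root w)
  (i j : 'I_n) (hij : i != j) (zeta : algC) (znz : zeta != 0) (s : 'M[algC]_n)
  (S : forall (y : 'cV[algC]_n) r, (s *m y) r 0 = cf i j zeta r * y (tperm i j r) 0)
  (t : hypidx n e) :
  (forall y, hyp w t y <-> hyp w t (s *m y)) <-> fixt i j zeta w t.
Proof.
case: t => [[[a b] k] /= hab]; rewrite /hyp /fixt /=.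
apply: (fix_iff (prim_nz he hw) hij znz S).
by rewrite neq_ltn hab.
Qed.

Lemma count_g e n (w : algC) (he : (0 < e)%N) (hw : e.-primitive_root w)
  (i j : 'I_n) (hij : i != j) (zeta : algC) (hzeta : zeta ^+ e = 1) (znz : zeta != 0)
  (a b : 'I_n) (ab : a != b) :
  (\sum_(k : 'I_e) (~~ fixr i j zeta w a b k : nat))%N =
  if a \in [set i; j] then (if b \in [set i; j] then e - (if odd e then 1 else 2) else e)%N
  else (if b \in [set i; j] then e else 0)%N.
Proof.
rewrite sum_ind card_neg card_ord /fixr.
case Ha: (a \in [set i; j]); case Hb: (b \in [set i; j]) => /=.
- congr (_ - _)%N.
  have hji : (j == i) = false by rewrite eq_sym (negbTE hij).
  move: Ha Hb ab; rewrite !inE => /orP [] /eqP -> /orP [] /eqP ->; rewrite ?eqxx // => _.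
    have -> : [set x : 'I_e | cf i j zeta i == (w ^+ x) ^+ 2 * cf i j zeta j]
       = [set x : 'I_e | (w ^+ x) ^+ 2 == zeta ^+ 2].
      apply/setP => x; rewrite !inE /cf eqxx hji eqxx.
      by rewrite -(inj_eq (mulIf znz)) mulfVK // eq_sym expr2.
    exact: count_sq.
  have -> : [set x : 'I_e | cf i j zeta j == (w ^+ x) ^+ 2 * cf i j zeta i]
     = [set x : 'I_e | (w ^+ x) ^+ 2 == (zeta^-1) ^+ 2].
    apply/setP => x; rewrite !inE /cf eqxx hji eqxx.
    by rewrite -(inj_eq (mulIf (invr_neq0 znz))) mulfK // eq_sym expr2.
  by apply: count_sq; rewrite // exprVn hzeta invr1.
- have -> : [set x : 'I_e | false] = set0 by apply/setP => x; rewrite !inE.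
  by rewrite cards0 subn0.
- have -> : [set x : 'I_e | false] = set0 by apply/setP => x; rewrite !inE.
  by rewrite cards0 subn0.
- have -> : [set x : 'I_e | true] = setT by apply/setP => x; rewrite !inE.
  by rewrite cardsT card_ord subnn.
Qed.

Lemma count_N e n (w : algC) (he : (0 < e)%N) (hw : e.-primitive_root w)
  (i j : 'I_n) (hij : i != j) (zeta : algC) (hzeta : zeta ^+ e = 1) (znz : zeta != 0) :
  #|[set t : hypidx n e | ~~ fixt i j zeta w t]| =
  (2 * (n - 2) * e + (e - (if odd e then 1 else 2)))%N.
Proof.
set F := fun (x : 'I_n * 'I_n * 'I_e) => (x.1.1 < x.1.2)%N && ~~ fixr i j zeta w x.1.1 x.1.2 x.2.
have E1 : #|[set t : hypidx n e | ~~ fixt i j zeta w t]| = #|[set x | F x]|.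
  rewrite -(card_imset _ val_inj).
  have -> : [set val t | t in [set t : hypidx n e | ~~ fixt i j zeta w t]] = [set x | F x].
    apply/setP => x; rewrite [in RHS]inE.
    apply/imsetP/idP.
      by case=> t; rewrite inE => Ht ->; rewrite /F (valP t).
    move=> /andP [h1 h2]; exists (exist _ x h1) => //; by rewrite inE.
  by [].
rewrite E1 -sum_ind /F.
rewrite -(pair_bigA _ (fun (p : 'I_n * 'I_n) (k : 'I_e) =>
    ((p.1 < p.2)%N && ~~ fixr i j zeta w p.1 p.2 k : nat))) /=.
rewrite -(pair_bigA _ (fun (a b : 'I_n) => \sum_(k : 'I_e)
    ((a < b)%N && ~~ fixr i j zeta w a b k : nat))) /=.
rewrite -(count_main hij (g := fun a b => \sum_(k : 'I_e) (~~ fixr i j zeta w a b k : nat))).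
  apply: eq_bigr => a _; apply: eq_bigr => b _.
  case: (a < b)%N; first by rewrite mul1n.
  by rewrite mul0n big1.
move=> a b ab; exact: count_g.
Qed.

Theorem proposition3p9 (e n : nat) (he : (1 <= e)%N) (hn : (2 <= n)%N)
  (w : algC) (hw : e.-primitive_root w)
  (i j : 'I_n) (hij : i != j) (zeta : algC) (hzeta : zeta ^+ e = 1)
  (s : 'M[algC]_n) (hs : @in_Geen e n s) (hrefl : reflection_with_hyp s i j zeta) :
  (exists p : {perm hypidx n e}, induces_perm w s p) /\
  (forall p : {perm hypidx n e}, induces_perm w s p ->
     if ~~ odd e then
       (-1 : int) ^+ odd_perm p = (-1) ^+ ((n - 2) * e + (e - 2)./2)
       /\ (-1 : int) ^+ ((n - 2) * e + (e - 2)./2) = (-1) ^+ ((e - 2)./2)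
     else
       (-1 : int) ^+ odd_perm p = (-1) ^+ ((n - 2) * e + (e - 1)./2)
       /\ (-1 : int) ^+ ((n - 2) * e + (e - 1)./2) = (-1) ^+ (n + (e - 1)./2)).
Proof.
case: hs => p0 [d [hd _ hsE]].
case: hrefl => hne hfix.
have S := refl_form he hij hzeta hd hsE hne hfix.
have e0 : (e == 0)%N = false by case: e he {hw hzeta hd}.
have znz : zeta != 0.
  apply/eqP => E; move: hzeta; rewrite E expr0n e0 => /eqP.
  by rewrite eq_sym oner_eq0.
have ss : forall y : 'cV[algC]_n, s *m (s *m y) = y.
  move=> y; apply/matrixP => r c; rewrite (ord1 c) !S tpermK.
  rewrite mulrA; have -> : cf i j zeta r * cf i j zeta (tperm i j r) = 1; last by rewrite mul1r.
  rewrite /cf; case: (eqVneq r i) => [->|ri]; first by rewrite tpermL eqxx eq_sym (negbTE hij) mulfV.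
  case: (eqVneq r j) => [->|rj]; first by rewrite tpermR eqxx mulVf.
  have -> : tperm i j r = r by rewrite tpermD // eq_sym.
  by rewrite (negbTE ri) (negbTE rj) mulr1.
have ex_iff : forall (t : hypidx n e) (y : 'cV[algC]_n), (exists2 z, hyp w t z & y = s *m z) <-> hyp w t (s *m y).
  move=> t y; split; first by case=> z hz ->; rewrite ss.
  by move=> h; exists (s *m y); rewrite ?ss.
have ind_iff : forall p : {perm hypidx n e}, induces_perm w s p <-> forall t y, hyp w (p t) y <-> hyp w t (s *m y).
  move=> p; split => H t y.
    by rewrite H ex_iff.
  by rewrite H ex_iff.
have cf_e : forall r, cf i j zeta r ^+ e = 1.
  move=> r; rewrite /cf; case: ifP => _; first by [].
  by case: ifP => _; rewrite ?exprVn ?hzeta ?invr1 ?expr1n.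
have cf_nz : forall r, cf i j zeta r != 0.
  move=> r; apply/eqP => E; have := cf_e r; rewrite E expr0n e0 => /eqP.
  by rewrite eq_sym oner_eq0.
have wnz := prim_nz he hw.
have img : forall t : hypidx n e, exists t' : hypidx n e, forall y, hyp w t' y <-> hyp w t (s *m y).
  move=> [[[a b] k] /= hab].
  set a' := tperm i j a; set b' := tperm i j b.
  set lam := w ^+ k * cf i j zeta b / cf i j zeta a.
  have lam_e : lam ^+ e = 1.
    by rewrite /lam !exprMn exprVn !cf_e exprAC (prim_expr_order hw) expr1n invr1 !mulr1.
  have [k1 hk1] := prim_rootP hw lam_e.
  have lamV_e : lam^-1 ^+ e = 1 by rewrite exprVn lam_e invr1.
  have [k2 hk2] := prim_rootP hw lamV_e.
  have ab' : a' != b' by rewrite /a' /b' (inj_eq (@perm_inj _ _)) neq_ltn hab.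
  case: (ltngtP a' b') => h.
  - exists (exist _ ((a', b'), k1) h) => y; rewrite /hyp /= !S -/a' -/b' -hk1.
    exact: alg1.
  - exists (exist _ ((b', a'), k2) h) => y; rewrite /hyp /= !S -/a' -/b' -hk2.
    exact: alg2.
  - by move: ab'; rewrite (val_inj h) eqxx.
split.
  have [f hf] := fin_all_exists img.
  have finj : injective f.
    move=> t1 t2 E; apply: (hyp_inj he hw) => y.
    by rewrite -[y]ss -hf E hf.
  exists (perm finj); apply/ind_iff => t y; rewrite permE; exact: hf.
move=> q /ind_iff hq.
have qq : forall t, q (q t) = t.
  move=> t; apply: (hyp_inj he hw) => y; by rewrite hq hq ss.
have fixq : forall t, (q t == t) = fixt i j zeta w t.
  move=> t; apply/eqP/idP.
    move=> E; apply/(fixt_iff he hw hij znz S) => y; by rewrite -{1}E hq.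
  move/(fixt_iff he hw hij znz S) => H; apply: (hyp_inj he hw) => y.
  by rewrite hq -H.
rewrite (invol_odd qq).
have -> : [set t | q t != t] = [set t | ~~ fixt i j zeta w t].
  by apply/setP => t; rewrite !inE fixq.
rewrite (count_N he hw hij hzeta znz).
case ho: (odd e) => /=.
  have h1 : ~~ odd (e - 1) by rewrite oddB // ho.
  rewrite -mulnA half_split // signr_odd; split => //.
  have E : odd ((n - 2) * e + (e - 1)./2) = odd (n + (e - 1)./2).
    by rewrite !oddD oddM ho andbT (oddB hn) addbF.
  by rewrite -[LHS]signr_odd E signr_odd.
have he2 : (2 <= e)%N.
  rewrite ltn_neqAle he andbT; apply/eqP => E; by rewrite -E in ho.
have h1 : ~~ odd (e - 2) by rewrite oddB // ho.
rewrite -mulnA half_split // signr_odd; split => //.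
have E : odd ((n - 2) * e + (e - 2)./2) = odd ((e - 2)./2).
  by rewrite !oddD oddM ho andbF.
by rewrite -[LHS]signr_odd E signr_odd.
Qed.
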